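(* Let $\Phi \in \mathbb{R}^{m\times n}$ have unit $\ell_2$-norm columns $\phi_1,\dots,\phi_n$, let $X \in \mathbb{R}^{n\times K}$ with support $S=\mathrm{supp}(X)$, let $\overline{S}=[n]\setminus S$, assume $\Phi_S$ has full column rank, let $E\in\mathbb{R}^{m\times K}$ be arbitrary and $Y=\Phi X + E$. Let $q_1,\dots,q_K\ge 0$, $Q=\mathrm{diag}(q_1,\dots,q_K)$. Run SOMP-NS on $Y$, $\Phi$ with weights $q_k$, and let $t<|S|$ be such that all atoms selected before iteration $t$ belong to $S$, i.e. $S_t\subseteq S$. Let $P^{(t)}=\Phi_{S_t}\Phi_{S_t}^{+}$ (with $P^{(0)}=0$), $Z^{(t)}=(I-P^{(t)})\Phi X$ and $E^{(t)}=(I-P^{(t)})E$. If $$\left(1-\|\Phi_S^{+}\Phi_{\overline{S}}\|_{1}\right)\|\Phi_S^{\mathrm{T}} Z^{(t)} Q\|_{\infty} > 2\,\|\Phi^{\mathrm{T}} E^{(t)} Q\|_{\infty},$$ then the atom $j_t$ selected at iteration $t$ belongs to $S$ (regardless of tie-breaking).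
   Context: For $S\subseteq[n]$, $\Phi_S$ is the submatrix of columns indexed by $S$; $A^+$ is the Moore–Penrose pseudoinverse; $\|A\|_\infty=\max_i\sum_j|A_{i,j}|$ and $\|A\|_1=\max_j\sum_i|A_{i,j}|$. $\mathrm{supp}(X)$ is the set of row indices $i$ with $X_{i,k}\ne0$ for some $k$. Algorithm SOMP-NS, on input $Y\in\mathbb{R}^{m\times K}$, $\Phi$, weights $q_k\ge0$: set $S_0=\emptyset$, $R^{(0)}=Y$; at iteration $t=0,1,\dots$: choose $j_t\in\arg\max_{j\in[n]}\sum_{k=1}^K q_k|\langle r^{(t)}_k,\phi_j\rangle|$ where $r^{(t)}_k$ is the $k$-th column of $R^{(t)}$; set $S_{t+1}=S_t\cup\{j_t\}$ and $R^{(t+1)}=(I-\Phi_{S_{t+1}}\Phi_{S_{t+1}}^+)Y$. *)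

(* Defs.v *)
From HB Require Import structures.
From Stdlib Require Import ClassicalEpsilon.
From mathcomp Require Import all_boot all_order all_algebra.
From mathcomp Require Import reals.
Set Implicit Arguments. Unset Strict Implicit. Unset Printing Implicit Defensive.
Import Order.TTheory GRing.Theory Num.Theory.
Local Open Scope ring_scope.

Section Defs.
Variable R : realType.

Definition colS m n (Phi : 'M[R]_(m, n)) (S : {set 'I_n}) : 'M[R]_(m, #|S|) :=
  \matrix_(i < m, j < #|S|) Phi i (@enum_val _ (mem S) j).

Definition penrose m n (A : 'M[R]_(m, n)) (B : 'M[R]_(n, m)) : Prop :=
  [/\ A *m B *m A = A, B *m A *m B = B,
      (A *m B)^T = A *m B & (B *m A)^T = B *m A].

Definition pinv m n (A : 'M[R]_(m, n)) : 'M[R]_(n, m) :=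
  epsilon (inhabits 0) (fun B => penrose A B).

Definition normInf m n (A : 'M[R]_(m, n)) : R :=
  \big[Num.max/0]_(i < m) \sum_(j < n) `|A i j|.
Definition norm1 m n (A : 'M[R]_(m, n)) : R :=
  \big[Num.max/0]_(j < n) \sum_(i < m) `|A i j|.

Definition supp n K (X : 'M[R]_(n, K)) : {set 'I_n} :=
  [set i | [exists k, X i k != 0]].

Definition projS m n (Phi : 'M[R]_(m, n)) (S : {set 'I_n}) : 'M[R]_m :=
  colS Phi S *m pinv (colS Phi S).

Definition selected n (js : nat -> 'I_n) (t : nat) : {set 'I_n} :=
  [set js (nat_of_ord s) | s : 'I_t].

Definition residual m n K (Phi : 'M[R]_(m, n)) (Y : 'M[R]_(m, K))
  (js : nat -> 'I_n) (t : nat) : 'M[R]_(m, K) :=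
  (1%:M - projS Phi (selected js t)) *m Y.

Definition somp_score m n K (Phi : 'M[R]_(m, n)) (q : 'I_K -> R)
  (Res : 'M[R]_(m, K)) (j : 'I_n) : R :=
  \sum_(k < K) q k * `|(Phi^T *m Res) j k|.

(* js is a valid execution of SOMP-NS (any tie-breaking) for iterations 0..T *)
Definition somp_ns_run m n K (Phi : 'M[R]_(m, n)) (Y : 'M[R]_(m, K))
  (q : 'I_K -> R) (js : nat -> 'I_n) (T : nat) : Prop :=
  forall t, (t <= T)%N -> forall j : 'I_n,
    somp_score Phi q (residual Phi Y js t) j <=
    somp_score Phi q (residual Phi Y js t) (js t).

End Defs.

(* Main.v *)
Require Import Defs.
From HB Require Import structures.
From Stdlib Require Import ClassicalEpsilon.
From mathcomp Require Import all_boot all_order all_algebra.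
From mathcomp Require Import reals lra.
Import Order.TTheory GRing.Theory Num.Theory.
Local Open Scope ring_scope.

Section Helpers.
Set Implicit Arguments.
Context {R : realType}.

Lemma fullrank_penrose m s (A : 'M[R]_(m, s)) :
  \rank A = s -> penrose A (pinv A).
Proof.
move=> rk; rewrite /pinv; apply: epsilon_spec.
set M := A^T *m A.
have MT : M^T = M by rewrite /M trmx_mul trmxK.
have Mu : M \in unitmx.
  rewrite -row_free_unit -kermx_eq0; apply/eqP/row_matrixP => i.
  rewrite row0; set v := row i (kermx M).
  have vM : v *m M = 0 by apply/sub_kermxP; exact: row_sub.
  set w := v *m A^T.
  have w0 : w = 0.
    have : (w *m w^T) 0 0 = 0.
      by rewrite /w trmx_mul trmxK mulmxA -(mulmxA v) -/M vM mul0mx mxE.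
    rewrite mxE => h; clearbody w.
    apply/rowP => k; rewrite [RHS]mxE.
    have hp : forall j, predT j -> 0 <= w 0 j * w^T j 0.
      by move=> j _; rewrite mxE -expr2 sqr_ge0.
    have := @psumr_eq0P R _ predT (fun k => w 0 k * w^T k 0) hp h k isT.
    by rewrite /= mxE -expr2 => /eqP; rewrite sqrf_eq0 => /eqP.
  apply/eqP; rewrite -(mulmx_free_eq0 _ (B := A^T)); first exact/eqP.
  by rewrite /row_free mxrank_tr rk.
exists (invmx M *m A^T); split.
- by rewrite -!mulmxA -/M mulVmx // mulmx1.
- by rewrite -(mulmxA (invmx M)) -/M mulVmx // mul1mx.
- by rewrite !trmx_mul trmxK trmx_inv MT mulmxA.
- by rewrite -mulmxA -/M mulVmx // trmx1.
Qed.


Lemma colS_mul m n p (Phi : 'M[R]_(m, n)) (S : {set 'I_n}) (M : 'M[R]_(n, p)) :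
  (forall j k, j \notin S -> M j k = 0) ->
  Phi *m M = colS Phi S *m \matrix_(l < #|S|, k < p) M (@enum_val _ (mem S) l) k.
Proof.
move=> hM; apply/matrixP => i k; rewrite !mxE.
rewrite (bigID (mem S)) /= [X in _ + X]big1 ?addr0; last first.
  by move=> j hj; rewrite hM ?mulr0.
rewrite big_enum_val; apply: eq_bigr => l _; rewrite !mxE //.
Qed.

Lemma colS_sel m n (Phi : 'M[R]_(m, n)) (T : {set 'I_n}) :
  colS Phi T = Phi *m \matrix_(j < n, l < #|T|) ((j == @enum_val _ (mem T) l)%:R : R).
Proof.
apply/matrixP => i l; rewrite !mxE (bigD1 (@enum_val _ (mem T) l)) //= big1.
  by rewrite mxE eqxx mulr1 addr0.
by move=> j /negbTE hj; rewrite mxE hj mulr0.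
Qed.

Lemma normInf_ge0 p r (M : 'M[R]_(p, r)) : 0 <= normInf M.
Proof.
rewrite /normInf; elim/big_ind: _ => //.
  by move=> x y hx hy; rewrite le_max hx.
by move=> i _; apply: sumr_ge0 => j _.
Qed.

Lemma rowQ p K (q : 'I_K -> R) (M : 'M[R]_(p, K)) i :
  (forall k, 0 <= q k) ->
  \sum_k `|(M *m diag_mx (\row_k q k)) i k| = \sum_k q k * `|M i k|.
Proof.
move=> hq; apply: eq_bigr => k _.
by rewrite mul_mx_diag !mxE normrM (ger0_norm (hq k)) mulrC.
Qed.

Lemma rowQ_le p K (q : 'I_K -> R) (M : 'M[R]_(p, K)) i :
  (forall k, 0 <= q k) ->
  \sum_k q k * `|M i k| <= normInf (M *m diag_mx (\row_k q k)).
Proof.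
move=> hq; rewrite -rowQ //; rewrite /normInf.
exact: (le_bigmax _ (fun i => \sum_k `|(M *m diag_mx (\row_k q k)) i k|) i).
Qed.

Lemma normInfQ_le p K (q : 'I_K -> R) (M : 'M[R]_(p, K)) c :
  (forall k, 0 <= q k) -> 0 <= c ->
  (forall i, \sum_k q k * `|M i k| <= c) ->
  normInf (M *m diag_mx (\row_k q k)) <= c.
Proof.
move=> hq hc h; rewrite /normInf; apply: bigmax_le => // i _.
by rewrite rowQ.
Qed.

End Helpers.

Theorem theorem2 (R : realType) (m n K : nat) (Phi : 'M[R]_(m, n))
  (X : 'M[R]_(n, K)) (E : 'M[R]_(m, K)) (q : 'I_K -> R)
  (js : nat -> 'I_n) (t : nat) :
  (forall j : 'I_n, \sum_(i < m) Phi i j ^+ 2 = 1) ->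
  \rank (colS Phi (supp X)) = #|supp X| ->
  (forall k, 0 <= q k) ->
  somp_ns_run Phi (Phi *m X + E) q js t ->
  (t < #|supp X|)%N ->
  selected js t \subset supp X ->
  let S := supp X in
  let Q := diag_mx (\row_k q k) in
  let P := projS Phi (selected js t) in
  let Z := (1%:M - P) *m (Phi *m X) in
  let Et := (1%:M - P) *m E in
  (1 - norm1 (pinv (colS Phi S) *m colS Phi (~: S)))
      * normInf ((colS Phi S)^T *m Z *m Q)
    > 2 * normInf (Phi^T *m Et *m Q) ->
  js t \in S.
Proof.
move=> _ hrk hq hrun _ hsub S Q P Z Et hcond.
apply/negPn/negP => hj.
set A := colS Phi S; set B := pinv A.
have [pABA _ pABT _] := fullrank_penrose hrk; rewrite -/S -/A -/B in pABA pABT.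
have hPX := @colS_mul R _ _ _ Phi S X.
have hX : forall j k, j \notin S -> X j k = 0.
  by move=> j k; rewrite inE => /existsPn /(_ k) /negPn /eqP.
move: (hPX hX) => {}hPX.
set XS := \matrix_(l < #|S|, k < K) X (@enum_val _ (mem S) l) k in hPX.
set T := selected js t.
have hCT := colS_sel Phi T.
set DT := \matrix_(j < n, l < #|T|) _ in hCT.
have hD : forall j k, j \notin S -> DT j k = 0.
  move=> j l nj; rewrite mxE; case: eqP => // e; case/negP: nj.
  by rewrite e; apply: (subsetP hsub); apply: enum_valP.
rewrite (@colS_mul R _ _ _ Phi S DT hD) -/A in hCT.
set DS := \matrix_(l < #|S|, k < #|T|) _ in hCT.
set W := XS - DS *m (pinv (colS Phi T) *m (Phi *m X)).
have hZ : Z = A *m W.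
  by rewrite /Z /P /projS -/T mulmxBl mul1mx /W mulmxBr -hPX !mulmxA [X in X *m pinv _]hCT.
have hZ2 : Z = B^T *m (A^T *m Z).
  by rewrite mulmxA -trmx_mul pABT {2}hZ mulmxA pABA.
set G := A^T *m Z.
set e := normInf (Phi^T *m Et *m Q).
set N := normInf (A^T *m Z *m Q).
set a := norm1 (B *m colS Phi (~: S)).
set j := js t.
have hRes : residual Phi (Phi *m X + E) js t = Z + Et.
  by rewrite /residual mulmxDr.
set sc := fun c => somp_score Phi q (residual Phi (Phi *m X + E) js t) c.
have hsc : forall c, sc c = \sum_k q k * `|(Phi^T *m Z) c k + (Phi^T *m Et) c k|.
  by move=> c; rewrite /sc /somp_score hRes mulmxDr; apply: eq_bigr => k _; rewrite mxE.
have e0 : 0 <= e by apply: normInf_ge0.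
have N0 : 0 <= N by apply: normInf_ge0.
have sc0 : 0 <= sc j.
  by rewrite /sc /somp_score; apply: sumr_ge0 => k _; apply: mulr_ge0.
have h1 : N <= sc j + e.
  apply: normInfQ_le => //; first by apply: addr_ge0.
  move=> l.
  have hle := hrun t (leqnn t) (@enum_val _ (mem S) l).
  rewrite -/j -/(sc _) -/(sc j) in hle.
  have hG : forall k, (Phi^T *m Z) (@enum_val _ (mem S) l) k = (A^T *m Z) l k.
    by move=> k; rewrite !mxE; apply: eq_bigr => i _; rewrite !mxE.
  have hEt := rowQ_le q (Phi^T *m Et) (@enum_val _ (mem S) l) hq.
  rewrite -/Q -/e in hEt.
  suff : \sum_k q k * `|(A^T *m Z) l k| - \sum_k q k * `|(Phi^T *m Et) (@enum_val _ (mem S) l) k|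
           <= sc (@enum_val _ (mem S) l) by move=> h; lra.
  rewrite hsc -sumrB; apply: ler_sum => k _; rewrite -mulrBr -hG.
  by apply: ler_wpM2l => //; apply: lerB_normD.
have hjS : j \in ~: S by rewrite inE.
set jj := enum_rank_in hjS j.
have hjj : @enum_val _ (mem (~: S)) jj = j by rewrite /jj enum_rankK_in.
have hc : \sum_l `|(B *m Phi) l j| <= a.
  have -> : \sum_l `|(B *m Phi) l j| = \sum_l `|(B *m colS Phi (~: S)) l jj|.
    apply: eq_bigr => l _; congr `|_|; rewrite !mxE; apply: eq_bigr => i _.
    by rewrite !mxE hjj.
  rewrite /a /norm1.
  exact: (le_bigmax _ (fun c => \sum_i `|(B *m colS Phi (~: S)) i c|) jj).
have hPZ : Phi^T *m Z = (B *m Phi)^T *m G.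
  by rewrite {1}hZ2 trmx_mul mulmxA.
have hrow : forall l, \sum_k q k * `|G l k| <= N.
  by move=> l; rewrite /N; apply: rowQ_le.
have h2 : \sum_k q k * `|(Phi^T *m Z) j k| <= a * N.
  rewrite hPZ.
  apply: (@le_trans _ _ (\sum_k \sum_l q k * (`|(B *m Phi) l j| * `|G l k|))).
    apply: ler_sum => k _; rewrite -mulr_sumr; apply: ler_wpM2l => //.
    rewrite mxE; apply: le_trans (ler_norm_sum _ _ _) _.
    by apply: ler_sum => l _; rewrite mxE normrM.
  rewrite exchange_big /=.
  apply: (@le_trans _ _ (\sum_l `|(B *m Phi) l j| * N)).
    apply: ler_sum => l _.
    have -> : \sum_k q k * (`|(B *m Phi) l j| * `|G l k|) =
              `|(B *m Phi) l j| * \sum_k q k * `|G l k|.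
      by rewrite mulr_sumr; apply: eq_bigr => k _; rewrite mulrCA.
    by apply: ler_wpM2l => //; apply: hrow.
  by rewrite -mulr_suml; apply: ler_wpM2r.
have h3 : sc j <= \sum_k q k * `|(Phi^T *m Z) j k| + e.
  have hEt := rowQ_le q (Phi^T *m Et) j hq.
  rewrite -/Q -/e in hEt.
  apply: (@le_trans _ _ (\sum_k q k * `|(Phi^T *m Z) j k| +
                          \sum_k q k * `|(Phi^T *m Et) j k|)); last by lra.
  rewrite hsc -big_split /=; apply: ler_sum => k _; rewrite -mulrDr.
  by apply: ler_wpM2l => //; apply: ler_normD.
rewrite -/N -/e -/a /A in hcond.
move: hcond; rewrite mulrBl mul1r; lra.
Qed.
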